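(* Let $G_1=(V,E_1)$ and $G_2=(V,E_2)$ be simple graphs on the same finite vertex set with degree sequences $d_1$ and $d_2$. If $d_1\succeq d_2$, then $\dim\mathcal{A}(\widehat G_1)\le\dim\mathcal{A}(\widehat G_2)$.
   Context: For real sequences $a,b$ of length $n$, with $a[i]$, $b[i]$ denoting the $i$-th largest components, $a$ majorizes $b$, written $a\succeq b$, if $\sum_{i=1}^k a[i]\ge\sum_{i=1}^k b[i]$ for $k=1,\dots,n$, with equality for $k=n$. For a simple graph $G=(V,E)$, $\widehat G$ is the complete graph $(V,\binom{V}{2})$ with pairs in $E$ colored red and the other pairs colored blue. For a 2-colored graph $H=(V,F)$, the alternating cone $\mathcal{A}(H)\subseteq\mathbb{R}^F$ is the set of $x\ge0$ such that at each vertex the sum of $x(e)$ over incident red edges equals the sum over incident blue edges. *)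

(* Defs.v *)
From mathcomp Require Import all_boot all_order all_algebra.
From mathcomp Require Import boolp reals.
Set Implicit Arguments. Unset Strict Implicit. Unset Printing Implicit Defensive.
Import Order.TTheory GRing.Theory Num.Theory.
Local Open Scope ring_scope.

Definition simple_graph (V : finType) (adj : rel V) : Prop :=
  symmetric adj /\ irreflexive adj.

Definition pair2 (V : finType) := {e : {set V} | #|e| == 2%N}.

(* Coloring of hat G: a pair is red iff it is an edge of G, blue otherwise. *)
Definition red_pair (V : finType) (adj : rel V) (e : pair2 V) : bool :=
  [exists u, exists v, (val e == [set u; v]) && adj u v].

Definition in_alt_cone (R : realType) (V : finType) (adj : rel V)
    (x : pair2 V -> R) : Prop :=
  (forall e, 0 <= x e) /\
  (forall v : V,
     \sum_(e : pair2 V | (v \in val e) && red_pair adj e) x e =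
     \sum_(e : pair2 V | (v \in val e) && ~~ red_pair adj e) x e).

Definition lin_indep (R : realType) (P : Type) (r : nat) (f : 'I_r -> P -> R)
  : Prop :=
  forall c : 'I_r -> R, (forall p, \sum_(i < r) c i * f i p = 0) ->
    forall i, c i = 0.

(* Dimension of a subset A of R^P (P finite): dimension of its linear span,
   i.e. the maximal number of linearly independent vectors of A. *)
Definition set_dim (R : realType) (P : finType) (A : (P -> R) -> Prop) : nat :=
  \max_(r < #|P|.+1 |
        `[< exists f : 'I_r -> P -> R, (forall i, A (f i)) /\ lin_indep f >])
    (r : nat).

Definition deg (V : finType) (adj : rel V) (v : V) : nat := #|[set u | adj v u]|.

Definition degseq (V : finType) (adj : rel V) : seq nat :=
  sort geq [seq deg adj v | v <- enum V].

Definition majorizes (a b : seq nat) : Prop :=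
  size a = size b /\
  (forall k, (k <= size a)%N -> (sumn (take k b) <= sumn (take k a))%N) /\
  sumn a = sumn b.

(* Main.v *)
Require Import Defs.
From mathcomp Require Import all_boot all_order all_algebra.
From mathcomp Require Import boolp reals.
From mathcomp Require Import perm zify ring lra.
Set Implicit Arguments. Unset Strict Implicit. Unset Printing Implicit Defensive.
Import Order.TTheory GRing.Theory Num.Theory.
Local Open Scope ring_scope.

Section Fiber.
Variables (R : realType) (V : finType).
Local Notation E := (pair2 V).

Definition dg (y : E -> R) (v : V) := \sum_(e : E | v \in val e) y e.
Definition inP (y : E -> R) (d : V -> R) :=
  (forall e, 0 <= y e <= 1) /\ (forall v, dg y v = d v).

Lemma inP_ext y y' d d' : (forall e, y e = y' e) -> (forall v, d v = d' v) ->
  inP y d -> inP y' d'.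
Proof.
move=> hy hd [yb yd]; split; first by move=> e; rewrite -hy.
by move=> v; rewrite -hd -yd /dg; apply: eq_bigr => e _; rewrite hy.
Qed.

Lemma inP_conv y z d1 d2 t : 0 <= t <= 1 -> inP y d1 -> inP z d2 ->
  inP (fun e => (1 - t) * y e + t * z e) (fun v => (1 - t) * d1 v + t * d2 v).
Proof.
move=> /andP[t0 t1] [yb yd] [zb zd]; split.
  move=> e; have /andP[? ?] := yb e; have /andP[? ?] := zb e.
  apply/andP; split; nra.
move=> v; rewrite /dg big_split /= -!mulr_sumr.
by have := yd v; have := zd v; rewrite /dg => -> ->.
Qed.

Lemma imset_card2 (s : {perm V}) (e : E) : #|s @: val e| == 2%N.
Proof. rewrite card_imset ?(valP e) //; exact: perm_inj. Qed.

Definition relab (s : {perm V}) (e : E) : E := exist _ (s @: val e) (imset_card2 s e).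

Lemma relab_inj s : injective (relab s).
Proof.
move=> e1 e2 /(congr1 val) /= H; apply: val_inj.
exact: (imset_inj (@perm_inj _ s) H).
Qed.

Lemma inP_relab s y d : inP y d -> inP (fun e => y (relab s e)) (fun v => d (s v)).
Proof.
move=> [yb yd]; split=> // v.
rewrite -yd /dg [RHS](reindex_inj (@relab_inj s)) /=.
by apply: eq_bigl => e /=; rewrite mem_imset //; exact: perm_inj.
Qed.


Section Graph.
Variable adj : rel V.
Hypothesis G : simple_graph adj.

Definition ind (e : E) : R := if red_pair adj e then 1 else 0.
Definition sg (e : E) : R := if red_pair adj e then -1 else 1.

Lemma pair_other (e : E) v : v \in val e -> exists u, u != v /\ val e = [set v; u].
Proof.
have /cards2P [x [y [xy ->]]] := valP e.
rewrite !inE => /orP [] /eqP ->; first by exists y; rewrite eq_sym.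
by exists x; split => //; rewrite setUC.
Qed.

Lemma red_unique v (e : E) : (v \in val e) && red_pair adj e ->
  exists u0, forall u, (adj v u && (val e == [set v; u])) = (u == u0).
Proof.
case: G => Gs Gi.
case/andP => ve /existsP [a /existsP [b /andP [/eqP ee ab]]].
have [u0 [u0v eu0]] := pair_other ve.
exists u0 => u; apply/idP/idP.
  case/andP => vu /eqP eu.
  have : u \in val e by rewrite eu !inE eqxx orbT.
  rewrite eu0 !inE => /orP [/eqP uv|//].
  by move: vu; rewrite uv Gi.
move/eqP => ->; rewrite eu0 eqxx andbT.
have H : [set a; b] = [set v; u0] by rewrite -ee.
have : v \in [set a; b] by rewrite H !inE eqxx.
have : u0 \in [set a; b] by rewrite H !inE eqxx orbT.
rewrite !inE => /orP [] /eqP u0e /orP [] /eqP vab.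
- by move: u0v; rewrite u0e vab eqxx.
- by rewrite u0e vab Gs.
- by rewrite u0e vab.
- by move: u0v; rewrite u0e vab eqxx.
Qed.

Lemma dg_ind v : dg ind v = (deg adj v)%:R.
Proof.
case: G => Gs Gi.
have step : forall e : E, (if v \in val e then ind e else 0) =
   \sum_(u : V) ((adj v u && (val e == [set v; u])) : nat)%:R.
  move=> e; rewrite /ind.
  case H : ((v \in val e) && red_pair adj e).
    have [u0 Hu] := red_unique H.
    move: H => /andP [-> ->].
    rewrite (bigD1 u0) //= Hu eqxx big1 ?addr0 // => u uu0.
    by rewrite Hu (negbTE uu0).
  rewrite big1 //; first by case: (v \in val e) H => //= ->.
  move=> u _; case E1 : (adj v u && (val e == [set v; u])) => //.
  move: E1 H => /andP [vu /eqP eu]; rewrite eu !inE eqxx /=.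
  suff -> : red_pair adj e by [].
  by apply/existsP; exists v; apply/existsP; exists u; rewrite eu eqxx vu.
rewrite /dg big_mkcond /= (eq_bigr _ (fun e _ => step e)) exchange_big /=.
rewrite /deg -sum1_card natr_sum [RHS]big_mkcond /=.
apply: eq_bigr => u _; rewrite !inE.
case vu : (adj v u) => /=; last by rewrite big1.
have uv : v != u by apply/eqP => uv; move: vu; rewrite uv Gi.
have c2 : #|[set v; u]| == 2%N by rewrite cards2 uv.
pose e0 : E := exist _ [set v; u] c2.
rewrite (bigD1 e0) //= eqxx big1 ?addr0 // => e ee0.
case: eqP => // ev; case/eqP: ee0; exact: val_inj.
Qed.


Lemma cone_to_fiber x : in_alt_cone adj x -> forall eps : R, 0 <= eps ->
  (forall e, eps * x e <= 1) ->
  inP (fun e => ind e + eps * (sg e * x e)) (fun v => (deg adj v)%:R).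
Proof.
case=> xn xb eps e0 he; split.
  move=> e; rewrite /ind /sg; have := xn e; have := he e.
  by case: red_pair => ? ?; apply/andP; split; nra.
move=> v; rewrite /dg big_split /= -mulr_sumr.
have -> : \sum_(e : E | v \in val e) sg e * x e = 0.
  rewrite (bigID (fun e : E => red_pair adj e)) /=.
  rewrite (eq_bigr (fun e : E => - x e)); last first.
    by move=> e /andP [_ H]; rewrite /sg H mulN1r.
  rewrite [X in _ + X](eq_bigr (fun e : E => x e)); last first.
    by move=> e /andP [_ /negbTE H]; rewrite /sg H mul1r.
  by rewrite sumrN xb addNr.
by rewrite mulr0 addr0; exact: dg_ind.
Qed.

Lemma fiber_to_cone w : inP w (fun v => (deg adj v)%:R) ->
  in_alt_cone adj (fun e => sg e * (w e - ind e)).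
Proof.
case=> wb wd; split.
  move=> e; rewrite /ind /sg; have /andP [? ?] := wb e.
  by case: red_pair; nra.
move=> v.
have h : \sum_(e : E | v \in val e) (ind e - w e) = 0.
  by rewrite sumrB; have := dg_ind v; rewrite /dg => ->; have := wd v; rewrite /dg => ->; rewrite subrr.
rewrite (bigID (fun e : E => red_pair adj e)) /= in h.
rewrite (eq_bigr (fun e : E => ind e - w e)); last first.
  by move=> e /andP [_ H]; rewrite /sg /ind H; ring.
rewrite [RHS](eq_bigr (fun e : E => - (ind e - w e))); last first.
  by move=> e /andP [_ /negbTE H]; rewrite /sg /ind H; ring.
by rewrite sumrN; apply/eqP; rewrite -subr_eq0 opprK h.
Qed.

End Graph.
End Fiber.

Lemma exch (R : realType) (P : finType) r (g p : 'I_r -> P -> R) (q : P -> R)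
  (b : 'I_r -> R) :
  lin_indep g -> (forall i, b i != 0) -> (forall i x, p i x = b i * g i x + q x) ->
  lin_indep p \/ exists j, lin_indep (fun i => if i == j then q else p i).
Proof.
move=> gi bn hp.
have [H|np] := pselect (lin_indep p); [by left | right].
have [c [hc [j cj]]] : exists c : 'I_r -> R,
    (forall x, \sum_i c i * p i x = 0) /\ exists j, c j != 0.
  apply: (contra_notP _ np) => H c hc i.
  apply: contrapT => ci; apply: H; exists c; split => //; exists i; exact/eqP.
exists j => e he.
pose D := \sum_i e i; pose C := \sum_i c i.
pose a i := if i == j then 0 else e i * b i.
have key1 : forall x, \sum_i (c i * b i) * g i x = - (C * q x).
  move=> x; rewrite (eq_bigr (fun i => c i * p i x - c i * q x)); last first.
    by move=> i _; rewrite hp; ring.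
  by rewrite sumrB hc sub0r -mulr_suml.
have key2 : forall x, \sum_i a i * g i x = - (D * q x).
  move=> x; rewrite (eq_bigr (fun i => e i * (if i == j then q else p i) x - e i * q x)); last first.
    by move=> i _; rewrite /a; case: (i == j); rewrite ?hp; ring.
  by rewrite sumrB he sub0r -mulr_suml.
have key : forall x, \sum_i (D * (c i * b i) - C * a i) * g i x = 0.
  move=> x; rewrite (eq_bigr (fun i => D * ((c i * b i) * g i x) - C * (a i * g i x))); last first.
    by move=> i _; ring.
  by rewrite sumrB -!mulr_sumr key1 key2; ring.
have := gi _ key j; rewrite /a eqxx mulr0 subr0 => /eqP.
rewrite !mulf_eq0 (negbTE cj) (negbTE (bn j)) !orbF => /eqP D0.
have ai : forall i, a i = 0.
  apply: gi => x; by rewrite key2 D0 mul0r oppr0.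
have ei : forall i, i != j -> e i = 0.
  move=> i ij; have := ai i; rewrite /a (negbTE ij) => /eqP.
  by rewrite mulf_eq0 (negbTE (bn i)) orbF => /eqP.
have ej : e j = 0.
  move: D0; rewrite /D (bigD1 j) //= big1 ?addr0 //.
move=> i; case: (eqVneq i j) => [->|]; [exact: ej | exact: ei].
Qed.

Section Chain.
Local Open Scope nat_scope.
Variables (n : nat) (b : nat -> nat).
Hypothesis bsorted : forall i j, i <= j < n -> b j <= b i.
Definition Sp (a : nat -> nat) k := \sum_(i < k) a i.
Variable P : (nat -> nat) -> Prop.
Definition mv (a : nat -> nat) u w :=
  fun i => if i == u then (a u).-1 else if i == w then (a w).+1 else a i.
Hypothesis Pstep : forall a u w, u < w < n -> a w + 2 <= a u -> P a -> P (mv a u w).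

Lemma Sp_mv a u w k : u < w -> 0 < a u ->
  Sp (mv a u w) k + (if (u < k) && (k <= w) then 1 else 0) = Sp a k.
Proof.
move=> uw au; elim: k => [|k IH]; first by rewrite /Sp !big_ord0.
rewrite /Sp !big_ord_recr /= -/(Sp _ _) -/(Sp _ _) -IH /mv.
case: (eqVneq k u) => [ku|ku]; case: (eqVneq k w) => [kw|kw];
  do 2 case: ifP => ?; try subst k; lia.
Qed.

Lemma Sp_recr a k : Sp a k.+1 = Sp a k + a k.
Proof. by rewrite /Sp big_ord_recr. Qed.

Lemma progress a : (forall k, k <= n -> Sp b k <= Sp a k) -> Sp a n = Sp b n ->
  ~ (forall i, i < n -> a i = b i) ->
  exists a', (P a -> P a') /\ (forall k, k <= n -> Sp b k <= Sp a' k) /\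
    Sp a' n = Sp b n /\ \sum_(k < n.+1) Sp a' k < \sum_(k < n.+1) Sp a k.
Proof.
move=> hS hn H.
have ex_u : exists i, (i < n) && (a i != b i).
  apply: contrapT => nx; apply: H => i ilt; apply/eqP; apply: contrapT => ne.
  by apply: nx; exists i; rewrite ilt; apply/negP.
case: (ex_minnP ex_u) => u /andP [un abu] umin.
have Seq : Sp a u = Sp b u.
  apply: eq_bigr => i _; apply/eqP; apply: contraT => ne.
  have := umin i; rewrite ne andbT => /(_ (leq_trans (ltn_ord i) (ltnW un))).
  by rewrite leqNgt ltn_ord.
have hu1 := hS u.+1 un; rewrite !Sp_recr Seq in hu1.
have bau : b u < a u by rewrite ltn_neqAle eq_sym abu; lia.
have ex_w : exists k, [&& u < k, k <= n & Sp a k == Sp b k].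
  by exists n; rewrite un leqnn hn eqxx.
case: (ex_minnP ex_w) => m' /and3P [um' m'n /eqP Sm'] m'min.
have m'u : m' != u.+1.
  apply/eqP => mu; move: Sm'; rewrite mu !Sp_recr Seq; lia.
pose w := m'.-1.
have uw : u < w by rewrite /w; lia.
have wn : w < n by rewrite /w; lia.
have hk : forall k, u < k -> k <= w -> Sp b k < Sp a k.
  move=> k uk kw; rewrite ltn_neqAle hS; last by lia.
  rewrite andbT; apply/negP => /eqP ee.
  have := m'min k; rewrite uk ee eqxx andbT.
  have -> : k <= n by lia.
  move=> /(_ isT); rewrite /w in kw; lia.
have m'w : m' = w.+1 by rewrite /w; lia.
have awbw : a w < b w.
  move: Sm'; rewrite m'w !Sp_recr; have := hk w uw (leqnn w); lia.
have bwbu := bsorted (i := u) (j := w); rewrite (ltnW uw) wn in bwbu.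
have auw : a w + 2 <= a u by have := bwbu isT; lia.
exists (mv a u w); split; first by apply: Pstep => //; rewrite uw wn.
have hmv := fun k => Sp_mv k uw (leq_ltn_trans (leq0n _) bau).
split.
  move=> k kn; have := hmv k; have := hS k kn.
  case: ifP => [/andP [h1 h2]|_]; last by lia.
  have := hk k h1 h2; lia.
split.
  have := hmv n; rewrite hn; case: ifP => [/andP [h1 h2]|_]; lia.
rewrite [X in _ < X](eq_bigr (fun k : 'I_n.+1 => Sp (mv a u w) k + (if (u < k) && (k <= w) then 1 else 0)%N)); last by move=> k _; rewrite hmv.
rewrite big_split /= -{1}[X in X < _]addn0 ltn_add2l.
have u1 : u.+1 < n.+1 by lia.
rewrite (bigD1 (Ordinal u1)) //= ltnSn /=.
have -> : u < w by [].
by [].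
Qed.

Lemma chain_aux m : forall a, \sum_(k < n.+1) Sp a k <= m ->
  (forall k, k <= n -> Sp b k <= Sp a k) -> Sp a n = Sp b n -> P a ->
  exists a', (forall i, i < n -> a' i = b i) /\ P a'.
Proof.
elim: m => [|m IH] a hm hS hn Pa.
all: case: (pselect (forall i, i < n -> a i = b i)) => [H|H]; first by exists a.
  by have [a' [_ [_ [_ lt]]]] := progress hS hn H; lia.
have [a' [Pa' [hS' [hn' lt]]]] := progress hS hn H.
apply: (IH a') => //; [lia | exact: Pa'].
Qed.
End Chain.

Lemma sum_take (s : seq nat) k : (k <= size s)%N ->
  (\sum_(i < k) nth 0%N s i)%N = sumn (take k s).
Proof.
elim: k => [|k IH] ks; first by rewrite big_ord0 take0.
by rewrite big_ord_recr /= IH ?(ltnW ks) // (take_nth 0%N ks) sumn_rcons.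
Qed.

Section Main.
Variables (R : realType) (V : finType) (adj1 adj2 : rel V).
Hypotheses (G1 : simple_graph adj1) (G2 : simple_graph adj2).
Hypothesis hmaj : majorizes (degseq adj1) (degseq adj2).
Local Notation E := (pair2 V).
Local Notation n := #|V|.

Definition L (adj : rel V) := sort (relpre (deg adj) geq) (enum V).

Lemma L_size (adj : rel V) : size (L adj) = n.
Proof. by rewrite /L (perm_size (permEl (perm_sort _ _))) cardE. Qed.
Lemma L_uniq (adj : rel V) : uniq (L adj).
Proof. by rewrite /L (perm_uniq (permEl (perm_sort _ _))) enum_uniq. Qed.
Lemma L_mem (adj : rel V) v : v \in L adj.
Proof. by rewrite /L (perm_mem (permEl (perm_sort _ _))) mem_enum. Qed.
Lemma degseqE (adj : rel V) : degseq adj = map (deg adj) (L adj).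
Proof. by rewrite /degseq sort_map. Qed.
Lemma degseq_size (adj : rel V) : size (degseq adj) = n.
Proof. by rewrite degseqE size_map L_size. Qed.

Lemma index_lt (adj : rel V) v : (index v (L adj) < n)%N.
Proof. by rewrite -(L_size adj) index_mem L_mem. Qed.

Definition tauf (v : V) := nth v (L adj1) (index v (L adj2)).

Lemma tauf_inj : injective tauf.
Proof.
move=> v1 v2; rewrite /tauf => h.
have i1 := index_lt adj2 v1; have i2 := index_lt adj2 v2.
move: h; rewrite (set_nth_default v1 v2) ?L_size // => /eqP.
rewrite nth_uniq ?L_size ?L_uniq // => /eqP h.
by rewrite -(nth_index v1 (L_mem adj2 v1)) -(nth_index v1 (L_mem adj2 v2)) h.
Qed.

Definition tau : {perm V} := perm tauf_inj.

Definition degR (adj : rel V) (v : V) : R := (deg adj v)%:R.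

Definition Q (d : V -> R) := exists (l : R) (c : E -> R), 0 < l /\
  forall y, inP y (degR adj1) -> inP (fun e => l * y (relab tau e) + c e) d.

Definition Pd (a : nat -> nat) := Q (fun v => (a (index v (L adj2)))%:R).

Lemma ind_inP (adj : rel V) : simple_graph adj -> inP (ind R adj) (degR adj).
Proof.
move=> G; split; first by move=> e; rewrite /ind; case: red_pair; rewrite ?lexx ?ler01.
by move=> v; rewrite dg_ind.
Qed.

Lemma sg_neq0 (adj : rel V) (e : E) : sg R adj e != 0.
Proof. by rewrite /sg; case: red_pair; rewrite ?oppr_eq0 oner_eq0. Qed.

Lemma Pd_step a u w : (u < w < n)%N -> (a w + 2 <= a u)%N -> Pd a -> Pd (mv a u w).
Proof.
move=> /andP [uw wn] auw [l [c [l0 hF]]].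
have /card_gt0P [x0 _] : (0 < n)%N by lia.
pose U := nth x0 (L adj2) u; pose W := nth x0 (L adj2) w.
have iU : index U (L adj2) = u by rewrite index_uniq ?L_size ?L_uniq //; lia.
have iW : index W (L adj2) = w by rewrite index_uniq ?L_size ?L_uniq //; lia.
have UW : U != W by rewrite nth_uniq ?L_size ?L_uniq //; lia.
pose s := tperm U W.
pose dl : R := (a u)%:R - (a w)%:R.
have dl2 : 2 <= dl.
  by rewrite /dl lerBrDr -natrD ler_nat addnC.
pose t := dl^-1.
have dlp : 0 < dl by lra.
have dl1 : 1 < dl by lra.
have tlt1 : t < 1 by rewrite /t invf_lt1.
have tp : 0 < t by rewrite /t invr_gt0.
have t0 : 0 <= t <= 1 by apply/andP; split; lra.
pose d := fun v => (a (index v (L adj2)))%:R : R.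
pose y0 := fun e => l * ind R adj1 (relab tau e) + c e.
have hy0 : inP y0 d := hF _ (ind_inP G1).
pose z := fun e => y0 (relab s e).
have hz : inP z (fun v => d (s v)) := inP_relab s hy0.
exists ((1 - t) * l), (fun e => (1 - t) * c e + t * z e); split.
  by apply: mulr_gt0 => //; lra.
move=> y hy.
apply: (inP_ext _ _ (inP_conv t0 (hF y hy) hz)).
  by move=> e; ring.
have dl0 : dl != 0 by rewrite gt_eqF.
have au0 : (0 < a u)%N by lia.
move=> v; rewrite /d /mv.
case: (eqVneq v U) => [->|vU].
  rewrite tpermL iU iW eqxx.
  have -> : ((a u).-1)%:R = (a u)%:R - 1 :> R.
    by rewrite -[in RHS](prednK au0) mulrSr addrK.
  by move: dl0; rewrite /t /dl => dl0; field.
case: (eqVneq v W) => [->|vW].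
  rewrite tpermR iU iW eq_sym (ltn_eqF uw) eqxx mulrSr.
  by move: dl0; rewrite /t /dl => dl0; field.
rewrite /s tpermD; [|by rewrite eq_sym|by rewrite eq_sym].
have iv1 : index v (L adj2) != u.
  by apply: contra vU => /eqP iv; rewrite /U -iv nth_index ?L_mem.
have iv2 : index v (L adj2) != w.
  by apply: contra vW => /eqP iv; rewrite /W -iv nth_index ?L_mem.
by rewrite (negbTE iv1) (negbTE iv2); ring.
Qed.

Definition a0 (i : nat) := nth 0%N (degseq adj1) i.
Definition bb (i : nat) := nth 0%N (degseq adj2) i.

Lemma Pd_base : Pd a0.
Proof.
exists 1, (fun _ => 0); split; first exact: ltr01.
move=> y hy; apply: (inP_ext _ _ (inP_relab tau hy)).
  by move=> e; rewrite mul1r addr0.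
move=> v; rewrite /degR permE /tauf /a0 degseqE (nth_map v) ?L_size ?index_lt //.
Qed.

Lemma Q_end a : (forall i, (i < n)%N -> a i = bb i) -> Pd a -> Q (degR adj2).
Proof.
move=> ha [l [c [l0 hF]]]; exists l, c; split => // y hy.
apply: (inP_ext _ _ (hF y hy)) => // v.
rewrite ha ?index_lt // /bb /degR degseqE (nth_map v) ?L_size ?index_lt //.
by rewrite nth_index ?L_mem.
Qed.

Lemma bsorted i j : (i <= j < n)%N -> (bb j <= bb i)%N.
Proof.
move=> /andP [ij jn].
have srt : sorted geq (degseq adj2).
  by apply: sort_sorted => x y; rewrite /geq /=; apply: leq_total.
have := sorted_leq_nth _ _ 0%N srt.
move=> /(_ _ _ i j); rewrite !inE degseq_size => h.
apply: h => //; last by lia.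
  by move=> y x z; rewrite /geq /=; lia.
by move=> x; rewrite /geq /=.
Qed.

Lemma Q_deg2 : Q (degR adj2).
Proof.
case: hmaj => hsz [hpre hsum].
have hS : forall k, (k <= n)%N -> (Sp bb k <= Sp a0 k)%N.
  move=> k kn; rewrite /Sp /bb /a0 !sum_take ?degseq_size //.
  by apply: hpre; rewrite degseq_size.
have hn : Sp a0 n = Sp bb n.
  rewrite /Sp /bb /a0 !sum_take ?degseq_size //.
  by rewrite -{1}(degseq_size adj1) -(degseq_size adj2) !take_size.
have [a' [ha' Pa']] := chain_aux bsorted Pd_step (leqnn _) hS hn Pd_base.
exact: Q_end ha' Pa'.
Qed.

Lemma main_lin r (f : 'I_r -> E -> R) : (forall i, in_alt_cone adj1 (f i)) ->
  lin_indep f -> exists g : 'I_r -> E -> R,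
  (forall i, in_alt_cone adj2 (g i)) /\ lin_indep g.
Proof.
move=> fA fi.
have [l [c [l0 hF]]] := Q_deg2.
have [pii h1 h2] := injF_bij (@relab_inj _ tau).
pose eps i := (1 + \sum_e f i e)^-1.
have fpos : forall i e, 0 <= f i e by move=> i e; case: (fA i) => h _; exact: h.
have sumge : forall i e, f i e <= \sum_e' f i e'.
  move=> i e; rewrite (bigD1 e) //= lerDl sumr_ge0 // => e' _; exact: fpos.
have epsp : forall i, 0 < eps i.
  move=> i; rewrite /eps invr_gt0; have := sumge i; have := fpos i.
  have : 0 <= \sum_e f i e by apply: sumr_ge0 => e _; exact: fpos.
  lra.
pose yf i := fun e => ind R adj1 e + eps i * (sg R adj1 e * f i e).
have yx : forall i, inP (yf i) (degR adj1).
  move=> i; apply: (cone_to_fiber G1 (fA i)); first exact: ltW.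
  move=> e; rewrite /eps mulrC ler_pdivrMr ?mul1r.
    by have := sumge i e; lra.
  have : 0 <= \sum_e f i e by apply: sumr_ge0 => e' _; exact: fpos.
  lra.
pose F := fun (y : E -> R) e => l * y (relab tau e) + c e.
pose pp i := fun e => sg R adj2 e * (F (yf i) e - ind R adj2 e).
pose q := fun e => sg R adj2 e * (F (ind R adj1) e - ind R adj2 e).
pose gg i := fun e => sg R adj2 e * sg R adj1 (relab tau e) * f i (relab tau e).
have ggi : lin_indep gg.
  move=> cc hc; apply: fi => p.
  have := hc (pii p); rewrite /gg h2.
  rewrite (eq_bigr (fun i => (sg R adj2 (pii p) * sg R adj1 p) * (cc i * f i p))); last first.
    by move=> i _; rewrite mulrCA.
  by rewrite -mulr_sumr => /eqP; rewrite !mulf_eq0 !(negbTE (sg_neq0 _ _)) /= => /eqP.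
have qA : in_alt_cone adj2 q.
  exact: (fiber_to_cone G2 (hF _ (ind_inP G1))).
have ppA : forall i, in_alt_cone adj2 (pp i).
  move=> i; exact: (fiber_to_cone G2 (hF _ (yx i))).
have := @exch R _ r gg pp q (fun i => l * eps i) ggi.
case.
- by move=> i; rewrite mulf_neq0 // gt_eqF.
- by move=> i e; rewrite /pp /q /gg /yf /F; ring.
- by move=> H; exists pp.
- move=> [j H]; exists (fun i => if i == j then q else pp i); split => //.
  by move=> i; case: (i == j).
Qed.

End Main.

Theorem theorem2p10 (R : realType) (V : finType) (adj1 adj2 : rel V)
  (G1 : simple_graph adj1) (G2 : simple_graph adj2)
  (hmaj : majorizes (degseq adj1) (degseq adj2)) :
  (set_dim (in_alt_cone (R:=R) adj1) <= set_dim (in_alt_cone (R:=R) adj2))%N.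
Proof.
rewrite /set_dim; apply/bigmax_leqP => r /asboolP [f [fA fi]].
have [g [gA gi]] := main_lin G1 G2 hmaj fA fi.
apply: (@leq_bigmax_cond _ _ (fun i => nat_of_ord i) r).
by apply/asboolP; exists g.
Qed.
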